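(* Let $q(m,n)=am^2+bmn+cn^2$ with $a,b,c\in\mathbb{Z}$ be a binary quadratic form whose discriminant $\Delta(q)=b^2-4ac$ is a perfect square (including $0$, and including the zero form). Then for every $0<\lambda\le 1$ there exists a nonnegative $f\in\ell^1(\mathbb{Z})$ with $\|\mathcal{I}_\lambda f\|_{\ell^1(\mathbb{Z})}=\infty$, where $\mathcal{I}_{\lambda}f(n)=\sum_{m\in\mathbb{Z}\setminus\{0\}}\frac{f(q(m,n))}{|m|^{\lambda}}$.
   Context: Sums of nonnegative terms are allowed to equal $+\infty$. *)

(* Defs.v *)
From Stdlib Require Import Reals ZArith List.
Open Scope R_scope.

Definition zpsum (g : Z -> R) (l : list Z) : R :=
  fold_right (fun k acc => g k + acc) 0 l.

(* The (nonnegative) series sum_{k in Z} g k converges to s: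
   s is the least upper bound of all finite partial sums. *)
Definition is_zsum (g : Z -> R) (s : R) : Prop :=
  is_lub (fun x => exists l : list Z, NoDup l /\ x = zpsum g l) s.

Definition zsum_finite (g : Z -> R) : Prop :=
  exists M : R, forall l : list Z, NoDup l -> zpsum g l <= M.

Definition in_l1 (f : Z -> R) : Prop := zsum_finite (fun k => Rabs (f k)).

Definition qform (a b c m n : Z) : Z := (a*m*m + b*m*n + c*n*n)%Z.

(* Summand of I_lambda f(n): f(q(m,n)) / |m|^lambda for m <> 0,
   and 0 for m = 0 (so summing over Z is summing over Z \ {0}). *)
Definition Iterm (a b c : Z) (lam : R) (f : Z -> R) (n m : Z) : R :=
  if Z.eqb m 0 then 0
  else f (qform a b c m n) / Rpower (IZR (Z.abs m)) lam.

(* ||I_lambda f||_{l^1(Z)} = +infinity : it is NOT the case that every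
   I_lambda f(n) is a finite number F n and sum_n F n is finite. *)
Definition Inorm_infinite (a b c : Z) (lam : R) (f : Z -> R) : Prop :=
  ~ (exists F : Z -> R,
       (forall n, is_zsum (Iterm a b c lam f n) (F n)) /\
       zsum_finite (fun n => Rabs (F n))).

(* Main.v *)
Require Import Defs.
From Stdlib Require Import Reals ZArith List Lra Lia FinFun.
Open Scope R_scope.

Fixpoint dl (N : nat) : list nat := match N with O => nil | S k => S k :: dl k end.

Lemma dl_in N t : In t (dl N) -> (1 <= t <= N)%nat.
Proof. induction N; simpl; [tauto|]. intros [H|H]; [lia|]. apply IHN in H; lia. Qed.

Lemma dl_nodup N : NoDup (dl N).
Proof. induction N; simpl; constructor; auto. intro H; apply dl_in in H; lia. Qed.

Fixpoint ssum (u : nat -> R) (N : nat) : R :=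
  match N with O => 0 | S k => u (S k) + ssum u k end.

Lemma zpsum_map_dl g h N : zpsum g (map h (dl N)) = ssum (fun t => g (h t)) N.
Proof. induction N; simpl; auto. unfold zpsum in *; simpl. rewrite IHN. auto. Qed.

Lemma ssum_le u v N : (forall t, (1 <= t <= N)%nat -> u t <= v t) -> ssum u N <= ssum v N.
Proof. induction N; simpl; intros H; [lra|]. assert (u (S N) <= v (S N)) by (apply H; lia).
  assert (ssum u N <= ssum v N) by (apply IHN; intros; apply H; lia). lra. Qed.

Lemma ssum_scal u c N : ssum (fun t => c * u t) N = c * ssum u N.
Proof. induction N; simpl; [ring|]. rewrite IHN; ring. Qed.

Definition hh (t : nat) : R := / INR t.

Lemma H1 N j : (1 <= N)%nat -> ssum hh (N + j) >= ssum hh N + INR j / INR (N + j).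
Proof.
  intros HN. induction j.
  - rewrite Nat.add_0_r. simpl. unfold Rdiv. lra.
  - rewrite Nat.add_succ_r. simpl ssum. unfold hh at 1.
    set (x := INR (N + j)) in *.
    assert (Hx : 1 <= x) by (unfold x; apply (le_INR 1); lia).
    rewrite S_INR. rewrite S_INR. fold x.
    assert (/ (x+1) <= / x) by (apply Rinv_le_contravar; lra).
    assert (0 <= INR j) by apply pos_INR.
    assert (INR j * / (x+1) <= INR j * / x) by (apply Rmult_le_compat_l; lra).
    assert ((INR j + 1) / (x + 1) = INR j * / (x+1) + / (x+1)) by (field; lra).
    unfold Rdiv in *. lra.
Qed.

Lemma H2 k : ssum hh (2 ^ k) >= 1 + INR k / 2.
Proof.
  induction k.
  - simpl. unfold hh. simpl. lra.
  - assert (E : (2 ^ S k = 2 ^ k + 2 ^ k)%nat) by (simpl; lia).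
    assert (P : (1 <= 2 ^ k)%nat) by (pose proof (Nat.pow_nonzero 2 k); lia).
    rewrite E. pose proof (H1 _ (2 ^ k) P) as Hh.
    assert (INR (2 ^ k) / INR (2 ^ k + 2 ^ k) = 1/2).
    { rewrite plus_INR. assert (0 < INR (2^k)) by (apply (lt_INR 0); lia). field; lra. }
    rewrite S_INR. lra.
Qed.

Lemma nat_unb M : exists n : nat, M < INR n.
Proof.
  destruct (archimed M) as [A _].
  destruct (Z_lt_le_dec (up M) 0) as [h|h].
  - exists O. simpl. apply IZR_lt in h. lra.
  - exists (Z.to_nat (up M)). rewrite INR_IZR_INZ. rewrite Z2Nat.id by lia. lra.
Qed.

Lemma hh_unb M : exists N, ssum hh N > M.
Proof.
  destruct (nat_unb (2 * M)) as [k Hk]. exists (2 ^ k)%nat. pose proof (H2 k). lra.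
Qed.

Lemma diverge (G : nat -> R) (P : R) : 0 < P ->
  (forall t, (1 <= t)%nat -> / (P * INR t) <= G t) -> forall M, exists N, ssum G N > M.
Proof.
  intros HP HG M. destruct (hh_unb (P * M)) as [N HN]. exists N.
  assert (ssum (fun t => / P * hh t) N <= ssum G N).
  { apply ssum_le. intros t Ht. unfold hh. rewrite <- Rinv_mult. apply HG; lia. }
  rewrite ssum_scal in H.
  assert (/ P * (P * M) < / P * ssum hh N) by (apply Rmult_lt_compat_l; [apply Rinv_0_lt_compat|]; lra).
  replace (/ P * (P * M)) with M in H0 by (field; lra). lra.
Qed.

Definition delta (k0 : Z) (k : Z) : R := if Z.eqb k k0 then 1 else 0.

Lemma delta_notin k0 l : ~ In k0 l -> zpsum (fun k => Rabs (delta k0 k)) l = 0.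
Proof.
  induction l; simpl; auto. intros H.
  change (zpsum (fun k => Rabs (delta k0 k)) (a :: l)) with (Rabs (delta k0 a) + zpsum (fun k => Rabs (delta k0 k)) l). rewrite IHl by tauto.
  unfold delta. destruct (Z.eqb_spec a k0); [subst; tauto|]. rewrite Rabs_R0; ring.
Qed.

Lemma delta_l1 k0 : in_l1 (delta k0).
Proof.
  exists 1. intros l Hl. induction Hl; [unfold zpsum; simpl; lra|].
  change (zpsum (fun k => Rabs (delta k0 k)) (x :: l)) with (Rabs (delta k0 x) + zpsum (fun k => Rabs (delta k0 k)) l).
  unfold delta at 1. destruct (Z.eqb_spec x k0).
  - subst. rewrite delta_notin by auto. rewrite Rabs_R1; lra.
  - rewrite Rabs_R0; lra.
Qed.

Lemma delta_nn k0 k : 0 <= delta k0 k.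
Proof. unfold delta; destruct (Z.eqb k k0); lra. Qed.

Lemma lub_ge g s x : is_zsum g s -> g x <= s.
Proof.
  intros [H _]. replace (g x) with (zpsum g (x :: nil)) by (unfold zpsum; simpl; ring).
  apply H. exists (x :: nil); split; auto. constructor; auto. constructor.
Qed.

Lemma Rpower_le_self x lam : 1 <= x -> lam <= 1 -> Rpower x lam <= x.
Proof. intros. rewrite <- (Rpower_1 x) at 2 by lra. apply Rle_Rpower; lra. Qed.

Lemma Rpower_pos' x lam : 0 < Rpower x lam.
Proof. unfold Rpower; apply exp_pos. Qed.

Lemma Iterm_ge a b c lam k0 n m : lam <= 1 -> m <> 0%Z -> qform a b c m n = k0 ->
  / IZR (Z.abs m) <= Iterm a b c lam (delta k0) n m.
Proof.
  intros Hl Hm Hq. unfold Iterm. destruct (Z.eqb_spec m 0); [lia|].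
  rewrite Hq. unfold delta. rewrite Z.eqb_refl. unfold Rdiv. rewrite Rmult_1_l.
  assert (1 <= IZR (Z.abs m)) by (apply IZR_le; lia).
  apply Rinv_le_contravar; [apply Rpower_pos'|]. apply Rpower_le_self; lra.
Qed.

Lemma caseA a b c lam p s : lam <= 1 -> p <> 0%Z -> s <> 0%Z -> qform a b c p s = 0%Z ->
  Inorm_infinite a b c lam (delta 0).
Proof.
  intros Hl Hp Hs Hq [F [HF [M HM]]].
  assert (HP : 0 < IZR (Z.abs p)) by (apply IZR_lt; lia).
  destruct (diverge (fun t => Rabs (F (s * Z.of_nat t)%Z)) _ HP) with (M := M) as [N HN].
  { intros t Ht. eapply Rle_trans; [|apply Rle_abs]. eapply Rle_trans; [|apply lub_ge, HF].
    eapply Rle_trans; [|apply (Iterm_ge _ _ _ _ _ _ (p * Z.of_nat t)%Z Hl)].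
    - rewrite Z.abs_mul, mult_IZR, (Z.abs_eq (Z.of_nat t)) by lia. rewrite <- INR_IZR_INZ. lra.
    - lia.
    - transitivity (Z.of_nat t * Z.of_nat t * qform a b c p s)%Z; [unfold qform; ring|]. rewrite Hq; ring. }
  assert (zpsum (fun n => Rabs (F n)) (map (fun t => s * Z.of_nat t)%Z (dl N)) <= M).
  { apply HM. apply Injective_map_NoDup; [|apply dl_nodup].
    intros x y H. apply Nat2Z.inj. apply (Z.mul_reg_l _ _ s); auto. }
  rewrite zpsum_map_dl in H. lra.
Qed.

Theorem mainTheorem5 (a b c : Z)
  (hdisc : exists k : Z, (b*b - 4*a*c)%Z = (k*k)%Z)
  (lam : R) (hlam0 : 0 < lam) (hlam1 : lam <= 1) :
  exists f : Z -> R,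
    (forall k, 0 <= f k) /\ in_l1 f /\ Inorm_infinite a b c lam f.
Proof.
  destruct hdisc as [k Hk].
  destruct (Z.eq_dec a 0) as [Ha|Ha].
  - (* a = 0: inner sum at n = 0 diverges *)
    exists (delta 0). split; [apply delta_nn|]. split; [apply delta_l1|].
    intros [F [HF _]]. specialize (HF 0%Z).
    destruct (diverge (fun t => Iterm a b c lam (delta 0) 0 (Z.of_nat t)) 1 ltac:(lra)) with (M := F 0%Z)
      as [N HN].
    { intros t Ht. rewrite Rmult_1_l. eapply Rle_trans; [|apply Iterm_ge; auto].
      - rewrite Z.abs_eq by lia. rewrite <- INR_IZR_INZ. lra.
      - lia.
      - unfold qform; subst; ring. }
    destruct HF as [HF _].
    assert (zpsum (Iterm a b c lam (delta 0) 0) (map Z.of_nat (dl N)) <= F 0%Z).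
    { apply HF. eexists; split; [|reflexivity].
      apply Injective_map_NoDup; [intros x y; apply Nat2Z.inj|apply dl_nodup]. }
    rewrite zpsum_map_dl in H. lra.
  - destruct (Z.eq_dec (k - b) 0) as [H1|H1]; [destruct (Z.eq_dec (-k - b) 0) as [H2|H2]|].
    + assert (Hb : b = 0%Z) by lia. assert (Hk0 : k = 0%Z) by lia. subst b k.
      assert (Hc : c = 0%Z).
      { assert (a * c = 0)%Z by lia. apply Z.mul_eq_0 in H. lia. }
      subst c.
      exists (delta a). split; [apply delta_nn|]. split; [apply delta_l1|].
      intros [F [HF [M HM]]].
      destruct (diverge (fun t => Rabs (F (Z.of_nat t))) 1 ltac:(lra)) with (M := M) as [N HN].
      { intros t Ht. eapply Rle_trans; [|apply Rle_abs]. eapply Rle_trans; [|apply lub_ge, HF].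
        eapply Rle_trans; [|apply (Iterm_ge _ _ _ _ _ _ 1%Z hlam1)].
        - simpl. rewrite Rmult_1_l, Rinv_1. assert (1 <= INR t) by (apply (le_INR 1); lia).
          rewrite <- Rinv_1. apply Rinv_le_contravar; lra.
        - lia.
        - unfold qform; ring. }
      assert (zpsum (fun n => Rabs (F n)) (map Z.of_nat (dl N)) <= M).
      { apply HM. apply Injective_map_NoDup; [intros x y; apply Nat2Z.inj|apply dl_nodup]. }
      rewrite zpsum_map_dl in H. lra.
    + exists (delta 0). split; [apply delta_nn|]. split; [apply delta_l1|].
      apply (caseA _ _ _ _ (-k - b) (2 * a)); auto; try lia.
      unfold qform. nia.
    + exists (delta 0). split; [apply delta_nn|]. split; [apply delta_l1|].
      apply (caseA _ _ _ _ (k - b) (2 * a)); auto; try lia.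
      unfold qform. nia.
Qed.
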